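(* Let $\psi:\Omega_n\to\mathbb{R}$ be any function, and define $|\!|\!|x|\!|\!|_\psi:=\big(\sum_{i=1}^n\|x_i\|\big)\,\psi\big(\frac{\|x_1\|}{\sum_{i}\|x_i\|},\ldots,\frac{\|x_n\|}{\sum_{i}\|x_i\|}\big)$ for $x=(x_1,\ldots,x_n)\in X^n\setminus\{0_{X^n}\}$ and $|\!|\!|0_{X^n}|\!|\!|_\psi:=0$. (i) If $|\!|\!|\cdot|\!|\!|_\psi\in\mathbf{N}_{X^n}$, then $\psi\in\mathbf{\Psi}_n$. (ii) If $|\!|\!|\cdot|\!|\!|_\psi\in\mathbf{N}^{\rm sc}_{X^n}$, then $\psi\in\mathbf{\Psi}^{\rm sc}_n$ and the norm $\|\cdot\|$ is strictly convex.
   Context: Let $(X,\|\cdot\|)$ be a normed vector space, $n\ge2$. $\mathbf{N}_{X^n}$ is the family of norms $|\!|\!|\cdot|\!|\!|$ on $X^n$ satisfying (A1) $|\!|\!|(x_1,\ldots,x_n)|\!|\!|=|\!|\!|(\pm x_1,\ldots,\pm x_n)|\!|\!|$ for all $x\in X^n$ and all sign choices, and (A2) $|\!|\!|(0_X,\ldots,0_X,v,0_X,\ldots,0_X)|\!|\!|=\|v\|$ for all $v\in X$ in any $i$th position. $\mathbf{N}^{\rm sc}_{X^n}$ is its subclass of strictly convex norms. $\Omega_n:=\{t\in\mathbb{R}^n\mid t_i\ge0,\ \sum_i t_i=1\}$, $\Omega_n^\circ:=\{t\in\Omega_n\mid t_i<1\ \forall i\}$. $\mathbf{\Psi}_n$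 is the class of convex continuous $\psi:\Omega_n\to\mathbb{R}$ with (B1) $\psi(\mathbf{e}_i)=1$ for all standard unit vectors $\mathbf{e}_i$ and (B2) $\psi(t)\ge(1-t_i)\psi\big(\frac{t_1}{1-t_i},\ldots,\frac{t_{i-1}}{1-t_i},0,\frac{t_{i+1}}{1-t_i},\ldots,\frac{t_n}{1-t_i}\big)$ for all $t\in\Omega_n^\circ$, $i=1,\ldots,n$; $\mathbf{\Psi}^{\rm sc}_n$ is its subclass of strictly convex functions. *)

(* Defs.v *)
From HB Require Import structures.
From mathcomp Require Import all_boot all_order all_algebra.
From mathcomp Require Import all_classical all_reals all_analysis.
Set Implicit Arguments. Unset Strict Implicit. Unset Printing Implicit Defensive.
Import Order.TTheory GRing.Theory Num.Theory.
Import numFieldNormedType.Exports.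
Local Open Scope classical_set_scope.
Local Open Scope ring_scope.

Section Defs.
Variables (R : realType).

Definition Omega (n : nat) : set 'rV[R]_n :=
  [set t | (forall i, 0 <= t ord0 i) /\ \sum_(i < n) t ord0 i = 1].

Definition Omega_int (n : nat) : set 'rV[R]_n :=
  [set t | Omega t /\ (forall i, t ord0 i < 1)].

Definition unitvec (n : nat) (i : 'I_n) : 'rV[R]_n := \row_j (i == j)%:R.

Definition dropvec (n : nat) (t : 'rV[R]_n) (i : 'I_n) : 'rV[R]_n :=
  \row_j (if j == i then 0 else t ord0 j / (1 - t ord0 i)).

Definition convex_on (n : nat) (psi : 'rV[R]_n -> R) :=
  forall s t, Omega s -> Omega t -> forall l : R, 0 <= l <= 1 ->
    psi (l *: s + (1 - l) *: t) <= l * psi s + (1 - l) * psi t.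

Definition strictly_convex_on (n : nat) (psi : 'rV[R]_n -> R) :=
  forall s t, Omega s -> Omega t -> s <> t -> forall l : R, 0 < l < 1 ->
    psi (l *: s + (1 - l) *: t) < l * psi s + (1 - l) * psi t.

(* the class Psi_n (psi is only relevant on Omega_n) *)
Definition PsiClass (n : nat) (psi : 'rV[R]_n -> R) : Prop :=
  [/\ convex_on psi,
      {within @Omega n, continuous psi},
      (forall i, psi (unitvec i) = 1) &
      (forall t, Omega_int t -> forall i,
         psi t >= (1 - t ord0 i) * psi (dropvec t i))].

Definition PsiClass_sc (n : nat) (psi : 'rV[R]_n -> R) : Prop :=
  PsiClass psi /\ strictly_convex_on psi.

Variable X : normedModType R.

Definition is_norm (n : nat) (N : ('I_n -> X) -> R) : Prop :=
  [/\ (forall x, N x = 0 <-> (forall i, x i = 0)),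
      (forall (a : R) x, N (fun i => a *: x i) = `|a| * N x) &
      (forall x y, N (fun i => x i + y i) <= N x + N y)].

Definition in_NXn (n : nat) (N : ('I_n -> X) -> R) : Prop :=
  [/\ is_norm N,
      (* (A1) *)
      (forall x (eps : 'I_n -> bool),
         N (fun i => if eps i then - x i else x i) = N x) &
      (* (A2) *)
      (forall (i : 'I_n) (v : X), N (fun j => if j == i then v else 0) = `|v|)].

Definition strictly_convex_Nn (n : nat) (N : ('I_n -> X) -> R) : Prop :=
  forall x y, N x = 1 -> N y = 1 -> (exists i, x i <> y i) ->
    N (fun i => 2^-1 *: (x i + y i)) < 1.

Definition in_NXn_sc (n : nat) (N : ('I_n -> X) -> R) : Prop :=
  in_NXn N /\ strictly_convex_Nn N.

Definition strictly_convex_norm : Prop :=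
  forall x y : X, `|x| = 1 -> `|y| = 1 -> x <> y -> `|2^-1 *: (x + y)| < 1.

(* |||x|||_psi ; sum ||x_i|| = 0 exactly when x = 0 *)
Definition psi_norm (n : nat) (psi : 'rV[R]_n -> R) (x : 'I_n -> X) : R :=
  let S := \sum_(i < n) `|x i| in
  if S == 0 then 0 else S * psi (\row_i (`|x i| / S)).

End Defs.

(* Main.v *)
Require Import Defs.
From HB Require Import structures.
From mathcomp Require Import all_boot all_order all_algebra.
From mathcomp Require Import all_classical all_reals all_analysis.
From mathcomp Require Import lra ring.
Import Order.TTheory GRing.Theory Num.Theory.
Import numFieldNormedType.Exports.
Local Open Scope ring_scope.

Lemma nN0 {R : realType} {X : normedModType R} {n} {N : ('I_n -> X) -> R} :
  is_norm N -> N (fun _ => 0) = 0.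
Proof. by case=> H _ _; apply/H. Qed.

Lemma nN_ge0 {R : realType} {X : normedModType R} {n} {N : ('I_n -> X) -> R} :
  is_norm N -> forall x, 0 <= N x.
Proof.
move=> HN x; have := HN; case=> H0 HZ HT.
have := HT x (fun i => -1 *: x i).
have -> : (fun i => x i + -1 *: x i) = (fun _ => 0).
  by apply: funext => i; rewrite scaleN1r subrr.
rewrite (nN0 HN) HZ normrN normr1 mul1r.
move=> h; have : 0 <= N x + N x by [].
lra.
Qed.

Lemma nN_sum {R : realType} {X : normedModType R} {n} {N : ('I_n -> X) -> R} :
  is_norm N -> forall F : 'I_n -> 'I_n -> X,
  N (fun j => \sum_i F i j) <= \sum_i N (F i).
Proof.
move=> HN F; have := HN; case=> H0 HZ HT.
pose N' (f : {ffun 'I_n -> X}) := N (fun j => f j).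
have -> : (fun j => \sum_i F i j) = (fun j => (\sum_i [ffun k => F i k]) j).
  by apply: funext => j; rewrite sum_ffunE; apply: eq_bigr => i _; rewrite ffunE.
have -> : \sum_i N (F i) = \sum_i N' [ffun k => F i k].
  by apply: eq_bigr => i _; congr N; apply: funext => k; rewrite ffunE.
apply: (big_ind2 (fun a b => N' a <= b)).
- rewrite /N'; have -> : (fun j => (0 : {ffun 'I_n -> X}) j) = (fun _ => 0).
    by apply: funext => j; rewrite ffunE.
  by rewrite (nN0 HN).
- move=> a b c d h1 h2; rewrite /N'.
  have -> : (fun j => (a + c) j) = (fun j => a j + c j).
    by apply: funext => j; rewrite ffunE.
  apply: le_trans (HT _ _) _; exact: lerD.
- by [].
Qed.

Lemma nN_sub {R : realType} {X : normedModType R} {n} {N : ('I_n -> X) -> R} :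
  is_norm N -> forall x y, N x <= N (fun i => x i - y i) + N y.
Proof.
move=> HN x y; have := HN; case=> H0 HZ HT.
have := HT (fun i => x i - y i) y.
have -> // : (fun i => x i - y i + y i) = x.
by apply: funext => i; rewrite subrK.
Qed.
Lemma pn_vec {R : realType} {X : normedModType R} {n} (psi : 'rV[R]_n -> R)
  (u : X) (c : 'I_n -> R) : `|u| = 1 -> (forall j, 0 <= c j) ->
  0 < \sum_i c i ->
  psi_norm psi (fun j => c j *: u) = (\sum_i c i) * psi (\row_j (c j / \sum_i c i)).
Proof.
move=> hu hc hS; rewrite /psi_norm.
have E : forall j, `|c j *: u| = c j by move=> j; rewrite normrZ hu mulr1 ger0_norm.
under eq_bigr do rewrite E.
rewrite (gt_eqF hS); congr (_ * psi _); apply/rowP => j; rewrite !mxE E //.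
Qed.

Lemma pn_omega {R : realType} {X : normedModType R} {n} (psi : 'rV[R]_n -> R)
  (u : X) (t : 'rV[R]_n) : `|u| = 1 -> Omega t ->
  psi_norm psi (fun j => t ord0 j *: u) = psi t.
Proof.
move=> hu [h0 h1]; rewrite (pn_vec psi u _ hu h0) h1 ?ltr01 // mul1r.
by congr psi; apply/rowP => j; rewrite mxE divr1.
Qed.

Lemma pn_bound {R : realType} {X : normedModType R} {n} {N : ('I_n -> X) -> R}
  (u : X) (c : 'I_n -> R) : `|u| = 1 -> in_NXn N ->
  N (fun j => c j *: u) <= \sum_i `|c i|.
Proof.
move=> hu [HN HA1 HA2].
have -> : (fun j => c j *: u) = (fun j => \sum_i (fun k => if k == i then c i *: u else 0) j).
  apply: funext => j /=; rewrite -big_mkcond /=.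
  by rewrite (big_pred1 j) // => i; rewrite eq_sym.
apply: le_trans (nN_sum HN _) _.
by apply: ler_sum => i _; rewrite HA2 normrZ hu mulr1.
Qed.
Lemma Omega_comb {R : realType} {n} {s t : 'rV[R]_n} {l : R} :
  Omega s -> Omega t -> 0 <= l <= 1 -> Omega (l *: s + (1 - l) *: t).
Proof.
move=> [s0 s1] [t0 t1] /andP[l0 l1]; split.
  move=> i; rewrite !mxE; apply: addr_ge0; apply: mulr_ge0 => //; lra.
under eq_bigr do rewrite !mxE.
by rewrite big_split /= -!mulr_sumr s1 t1 !mulr1 subrKC.
Qed.

Lemma psi_unit {R : realType} {X : normedModType R} {n} (psi : 'rV[R]_n -> R)
  (u : X) : `|u| = 1 -> in_NXn (psi_norm (X:=X) psi) -> forall i, psi (@unitvec R n i) = 1.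
Proof.
move=> hu [HN HA1 HA2] i.
have S1 : \sum_j ((j == i)%:R : R) = 1.
  by rewrite (bigD1 i) //= eqxx big1 ?addr0 // => j /negbTE ->.
have := pn_vec psi u (fun j => (j == i)%:R) hu.
rewrite S1 ltr01 mul1r => /(_ (fun j => ler0n _ _) isT).
have -> : (fun j => (j == i)%:R *: u) = (fun j => if j == i then u else 0).
  by apply: funext => j; case: eqP => _; rewrite ?scale1r ?scale0r.
rewrite HA2 hu => ->; congr psi; apply/rowP => j; rewrite !mxE divr1 eq_sym.
by [].
Qed.

Lemma psi_conv {R : realType} {X : normedModType R} {n} (psi : 'rV[R]_n -> R)
  (u : X) : `|u| = 1 -> in_NXn (psi_norm (X:=X) psi) -> convex_on psi.
Proof.
move=> hu [[H0 HZ HT] HA1 HA2] s t Os Ot l hl.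
rewrite -(pn_omega psi u _ hu (Omega_comb Os Ot hl)) -(pn_omega psi u _ hu Os).
rewrite -(pn_omega psi u _ hu Ot).
have -> : (fun j => (l *: s + (1 - l) *: t) ord0 j *: u) =
   (fun j => l *: (s ord0 j *: u) + (1 - l) *: (t ord0 j *: u)).
  by apply: funext => j; rewrite !mxE !scalerA -scalerDl.
apply: le_trans (HT _ _) _.
rewrite (HZ l (fun j => s ord0 j *: u)) (HZ (1 - l) (fun j => t ord0 j *: u)).
move: hl => /andP[l0 l1].
by rewrite !ger0_norm //; lra.
Qed.

Lemma psi_lip {R : realType} {X : normedModType R} {n} (psi : 'rV[R]_n -> R)
  (u : X) : `|u| = 1 -> in_NXn (psi_norm (X:=X) psi) -> forall s t, Omega s -> Omega t ->
  `|psi s - psi t| <= \sum_j `|s ord0 j - t ord0 j|.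
Proof.
move=> hu HN s t Os Ot; have := HN; case=> HN' _ _.
rewrite -(pn_omega psi u _ hu Os) -(pn_omega psi u _ hu Ot).
have h1 := nN_sub HN' (fun j => s ord0 j *: u) (fun j => t ord0 j *: u).
have h2 := nN_sub HN' (fun j => t ord0 j *: u) (fun j => s ord0 j *: u).
have b1 := pn_bound _ (fun j => s ord0 j - t ord0 j) hu HN.
have b2 := pn_bound _ (fun j => t ord0 j - s ord0 j) hu HN.
have e1 : (fun j => s ord0 j *: u - t ord0 j *: u) = (fun j => (s ord0 j - t ord0 j) *: u).
  by apply: funext => j; rewrite scalerBl.
have e2 : (fun j => t ord0 j *: u - s ord0 j *: u) = (fun j => (t ord0 j - s ord0 j) *: u).
  by apply: funext => j; rewrite scalerBl.
have e3 : \sum_j `|t ord0 j - s ord0 j| = \sum_j `|s ord0 j - t ord0 j|.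
  by apply: eq_bigr => j _; rewrite distrC.
rewrite e1 in h1; rewrite e2 in h2; rewrite e3 in b2.
rewrite ler_norml; apply/andP; split; lra.
Qed.
Lemma entry_le {R : realType} {k l} (M : 'M[R]_(k, l)) i j : `|M i j| <= `|M|.
Proof.
change (`|M i j| <= mx_norm M); rewrite mx_normrE.
exact: (le_bigmax _ (fun ij : 'I_k * 'I_l => `|M ij.1 ij.2|) (i, j)).
Qed.

Lemma psi_cont {R : realType} {X : normedModType R} {n} (psi : 'rV[R]_n -> R)
  (u : X) : `|u| = 1 -> in_NXn (psi_norm (X:=X) psi) -> (0 < n)%N ->
  {within @Omega R n, continuous psi}%classic.
Proof.
move=> hu HN n0; apply/subspace_continuousP => s Os.
apply/cvgrPdist_le => e e0.
rewrite near_withinE.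
have n0' : 0 < (n%:R : R) by rewrite ltr0n.
have := (@cvg_id _ (nbhs s)); move/cvgrPdist_lt => /(_ (e / n%:R)).
rewrite divr_gt0 // => /(_ isT).
apply: filterS => t hst Ot.
rewrite /from_subspace; have L := psi_lip psi u hu HN s t Os Ot; apply: (le_trans L).
apply: (@le_trans _ _ (\sum_(j < n) `|s - t|)).
  apply: ler_sum => j _.
  have := entry_le (s - t) ord0 j; by rewrite !mxE.
rewrite sumr_const card_ord -mulr_natr.
rewrite ltr_pdivlMr // in hst; exact: ltW.
Qed.
Lemma psi_drop {R : realType} {X : normedModType R} {n} (psi : 'rV[R]_n -> R)
  (u : X) : `|u| = 1 -> in_NXn (psi_norm (X:=X) psi) ->
  forall t, Omega_int t -> forall i,
         psi t >= (1 - t ord0 i) * psi (dropvec t i).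
Proof.
move=> hu [[H0 HZ HT] HA1 HA2] t [Ot ti1] i.
have Ot' := Ot; case: Ot' => t0 t1.
pose x := fun j => t ord0 j *: u.
pose c := fun j => if j == i then 0 else t ord0 j.
have hc : forall j, 0 <= c j by move=> j; rewrite /c; case: (j == i).
have S1 : \sum_j c j = 1 - t ord0 i.
  rewrite -t1 (bigD1 i) //= [in RHS](bigD1 i) //= /c eqxx add0r addrC addrK.
  by apply: eq_bigr => j /negbTE ->.
have Sp : 0 < \sum_j c j by rewrite S1 subr_gt0.
have hA1 := HA1 x (fun j => j == i).
have hT := HT x (fun j => if j == i then - x j else x j).
have e : (fun j => x j + (if j == i then - x j else x j)) = (fun j => 2 *: (c j *: u)).
  apply: funext => j; rewrite /c /x; case: (j == i).
    by rewrite subrr scale0r scaler0.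
  by rewrite scalerDl scale1r.
rewrite e HZ hA1 (pn_vec psi u c hu hc Sp) (pn_omega psi u t hu Ot) in hT.
have -> : dropvec t i = \row_j (c j / \sum_j0 c j0).
  apply/rowP => j; rewrite !mxE S1 /c; case: (j == i) => //.
  by rewrite mul0r.
rewrite -S1; move: hT; rewrite ger0_norm //; lra.
Qed.
Lemma sc_mid {R : realType} {X : normedModType R} {n} {N : ('I_n -> X) -> R} :
  is_norm N -> strictly_convex_Nn N -> forall x y, N x = 1 -> N y = 1 ->
  (exists i, x i <> y i) -> forall mu, 0 < mu < 1 ->
  N (fun j => mu *: x j + (1 - mu) *: y j) < 1.
Proof.
move=> HN Hsc x y x1 y1 xy mu /andP[m0 m1].
have HN' := HN; case: HN' => H0 HZ HT.
have hm := Hsc x y x1 y1 xy.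
pose m := fun j => 2^-1 *: (x j + y j).
have ge := nN_ge0 HN.
have [mh|mh] := lerP mu (2^-1).
  have -> : (fun j => mu *: x j + (1 - mu) *: y j) =
            (fun j => (2 * mu) *: m j + (1 - 2 * mu) *: y j).
    apply: funext => j; rewrite /m scalerA.
    have -> : 2 * mu * 2^-1 = mu by field.
    rewrite scalerDr -addrA -scalerDl; congr (_ + _ *: _); ring.
  apply: le_lt_trans (HT _ _) _.
  rewrite (HZ _ m) (HZ _ y) y1 !ger0_norm; try lra.
  have : 0 <= N m := ge m.
  rewrite -/m in hm; nra.
have -> : (fun j => mu *: x j + (1 - mu) *: y j) =
          (fun j => (2 * (1 - mu)) *: m j + (2 * mu - 1) *: x j).
  apply: funext => j; rewrite /m scalerA.
  have -> : 2 * (1 - mu) * 2^-1 = 1 - mu by field.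
  rewrite scalerDr addrAC -scalerDl; congr (_ *: _ + _); ring.
apply: le_lt_trans (HT _ _) _.
rewrite (HZ _ m) (HZ _ x) x1 !ger0_norm; try lra.
have : 0 <= N m := ge m.
rewrite -/m in hm; nra.
Qed.

Lemma scal_cancel {R : realType} {X : normedModType R} (u : X) (p q : R) :
  `|u| = 1 -> p *: u = q *: u -> p = q.
Proof.
move=> hu H.
have : (p - q) *: u == 0 by rewrite scalerBl H subrr.
rewrite scaler_eq0 subr_eq0 => /orP[/eqP //|/eqP u0].
by move: hu; rewrite u0 normr0 => /eqP; rewrite eq_sym oner_eq0.
Qed.

Lemma psi_pos {R : realType} {X : normedModType R} {n} (psi : 'rV[R]_n -> R)
  (u : X) : `|u| = 1 -> in_NXn (psi_norm (X:=X) psi) -> forall s, Omega s -> 0 < psi s.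
Proof.
move=> hu [HN _ _] s Os; have HN' := HN; case: HN' => H0 _ _.
rewrite -(pn_omega psi u _ hu Os); rewrite lt_def nN_ge0 // andbT.
apply/eqP => /H0 h.
case: Os => _; rewrite big1 => [/eqP|j _]; first by rewrite eq_sym oner_eq0.
by apply: (scal_cancel _ _ _ hu); rewrite scale0r h.
Qed.

Lemma psi_sc {R : realType} {X : normedModType R} {n} (psi : 'rV[R]_n -> R)
  (u : X) : `|u| = 1 -> in_NXn_sc (psi_norm (X:=X) psi) -> strictly_convex_on psi.
Proof.
move=> hu [HN Hsc] s t Os Ot st l /andP[l0 l1].
have HN2 := HN; case: HN2 => HN' HA1 HA2; have HN3 := HN'; case: HN3 => H0 HZ HT.
have Ap := psi_pos psi u hu HN s Os; have Bp := psi_pos psi u hu HN t Ot.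
set A := psi s; set B := psi t.
have hl : 0 <= l <= 1 by apply/andP; split; lra.
rewrite -(pn_omega psi u _ hu (Omega_comb Os Ot hl)).
pose a := fun j => A^-1 *: (s ord0 j *: u).
pose b := fun j => B^-1 *: (t ord0 j *: u).
have a1 : psi_norm psi a = 1.
  by rewrite /a HZ (pn_omega psi u _ hu Os) ger0_norm ?invr_ge0 ?ltW // mulVf // gt_eqF.
have b1 : psi_norm psi b = 1.
  by rewrite /b HZ (pn_omega psi u _ hu Ot) ger0_norm ?invr_ge0 ?ltW // mulVf // gt_eqF.
have lA : 0 < l * A by apply: mulr_gt0.
have lB : 0 < (1 - l) * B by apply: mulr_gt0 => //; lra.
pose D := l * A + (1 - l) * B.
have Dp : 0 < D by rewrite /D; apply: addr_gt0; apply: mulr_gt0 => //; lra.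
pose mu := l * A / D.
have mu01 : 0 < mu < 1.
  apply/andP; split; rewrite /mu.
    by apply: divr_gt0.
  by rewrite ltr_pdivrMr // mul1r /D; lra.
have ab : exists i, a i <> b i.
  apply/existsNP => H; apply: st.
  have E : forall i, A^-1 * s ord0 i = B^-1 * t ord0 i.
    move=> i; apply: (scal_cancel _ _ _ hu); rewrite -!scalerA.
    exact: H i.
  have AB : A^-1 = B^-1.
    case: Os => _ s1; case: Ot => _ t1.
    by rewrite -[A^-1]mulr1 -s1 -[B^-1]mulr1 -t1 !mulr_sumr; apply: eq_bigr => i _.
  apply/rowP => i; have := E i; rewrite AB => /(congr1 (fun z => B * z)).
  by rewrite !mulrA mulfV ?gt_eqF // !mul1r.
have := sc_mid HN' Hsc _ _ a1 b1 ab _ mu01.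
have -> : (fun j => (l *: s + (1 - l) *: t) ord0 j *: u) =
          (fun j => D *: (mu *: a j + (1 - mu) *: b j)).
  apply: funext => j; rewrite /a /b !mxE !scalerA -scalerDl scalerA.
  congr (_ *: _); rewrite /mu /D; field.
  by rewrite !gt_eqF // -/D.
rewrite HZ ger0_norm ?ltW // => h.
by rewrite -/D; rewrite -[X in _ < X]mulr1 ltr_pM2l.
Qed.

Lemma X_sc {R : realType} {X : normedModType R} {n} (psi : 'rV[R]_n -> R) :
  (0 < n)%N -> in_NXn_sc (psi_norm (X:=X) psi) -> strictly_convex_norm X.
Proof.
move=> n0 [[HN HA1 HA2] Hsc] x y x1 y1 xy.
pose i0 : 'I_n := Ordinal n0.
have := Hsc (fun j => if j == i0 then x else 0) (fun j => if j == i0 then y else 0).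
rewrite !HA2 => /(_ x1 y1).
have -> : (fun i => 2^-1 *: ((if i == i0 then x else 0) + (if i == i0 then y else 0))) =
   (fun i => if i == i0 then 2^-1 *: (x + y) else 0).
  by apply: funext => i; case: (i == i0); rewrite ?addr0 ?scaler0.
rewrite HA2; apply; exists i0; by rewrite eqxx.
Qed.

Theorem theorem2p12 (R : realType) (X : normedModType R) (n : nat)
  (hn : (2 <= n)%N) (hX : exists x : X, x != 0) (psi : 'rV[R]_n -> R) :
  (in_NXn (psi_norm (X := X) psi) -> PsiClass psi) /\
  (in_NXn_sc (psi_norm (X := X) psi) ->
     PsiClass_sc psi /\ strictly_convex_norm X).
Proof.
have n0 : (0 < n)%N by apply: leq_trans hn.
case: hX => x0 x0n.
pose u := `|x0|^-1 *: x0.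
have hu : `|u| = 1.
  by rewrite /u normrZ ger0_norm ?invr_ge0 // mulVf // normr_eq0.
have P1 : in_NXn (psi_norm (X := X) psi) -> PsiClass psi.
  move=> HN; split.
  - exact: psi_conv psi u hu HN.
  - exact: psi_cont psi u hu HN n0.
  - exact: psi_unit psi u hu HN.
  - exact: psi_drop psi u hu HN.
split => //.
move=> HS; split; last exact: X_sc psi n0 HS.
split; first by apply: P1; case: HS.
exact: psi_sc psi u hu HS.
Qed.
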